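(* Let $R$ be a nonzero commutative ring and let $\mathrm{Rd}(R)$ be endowed with the hull-kernel topology. If $\mathrm{Spec}(R)$ is infinite then $\dim(\mathrm{Rd}(R))=\infty$; if $\mathrm{Spec}(R)$ is finite then $\dim(\mathrm{Rd}(R))=|\mathrm{Spec}(R)|-1$. In all cases $\dim(\mathrm{Rd}(R))\ge\dim(\mathrm{Spec}(R))$. Moreover, if $\mathrm{Spec}(R)$ is linearly ordered by inclusion, then $\dim(\mathrm{Rd}(R))=\dim(\mathrm{Spec}(R))$.
   Context: $\mathrm{Rd}(R)$ is the set of proper radical ideals of $R$; its hull-kernel topology has as subbasis of closed sets the sets $\{H\in\mathrm{Rd}(R)\mid x_1,\dots,x_n\in H\}$ for $x_1,\dots,x_n\in R$. The dimension $\dim$ of a topological space is the supremum of lengths $t$ of chains $Z_0\subsetneq Z_1\subsetneq\dots\subsetneq Z_t$ of irreducible closed subsets; $|\cdot|$ denotes cardinality. *)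

(* Defs.v *)
From HB Require Import structures.
From mathcomp Require Import all_boot all_order all_algebra.
From Stdlib Require Import Classical ClassicalEpsilon.
Set Implicit Arguments. Unset Strict Implicit. Unset Printing Implicit Defensive.
Import GRing.Theory.
Local Open Scope ring_scope.

Section Ideals.
Variable R : comNzRingType.

Definition is_ideal (I : R -> Prop) : Prop :=
  I 0 /\ (forall x y, I x -> I y -> I (x + y)) /\ (forall r x, I x -> I (r * x)).

Definition is_proper (I : R -> Prop) : Prop := ~ I 1.

Definition is_radical (I : R -> Prop) : Prop := forall (x : R) (n : nat), I (x ^+ n) -> I x.

Definition is_prime_ideal (I : R -> Prop) : Prop :=
  is_ideal I /\ is_proper I /\ (forall x y, I (x * y) -> I x \/ I y).

Definition Rd : Type := {I : R -> Prop | is_ideal I /\ is_proper I /\ is_radical I}.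
Definition Spec : Type := {P : R -> Prop | is_prime_ideal P}.
End Ideals.

Section Topology.
Variable T : Type.

(* closed sets of the topology generated by a subbasis S of closed sets:
   the smallest family containing S and closed under finite unions and
   arbitrary intersections (empty union = empty set, empty intersection = T) *)
Inductive gen_closed (S : (T -> Prop) -> Prop) : (T -> Prop) -> Prop :=
| gc_sub A : S A -> gen_closed S A
| gc_empty : gen_closed S (fun _ => False)
| gc_union A B : gen_closed S A -> gen_closed S B -> gen_closed S (fun x => A x \/ B x)
| gc_inter (F : (T -> Prop) -> Prop) :
    (forall A, F A -> gen_closed S A) -> gen_closed S (fun x => forall A, F A -> A x).

Definition pred_sub (A B : T -> Prop) : Prop := forall x, A x -> B x.
Definition pred_ssub (A B : T -> Prop) : Prop := pred_sub A B /\ ~ pred_sub B A.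

Variable closed : (T -> Prop) -> Prop.

Definition irreducible_closed (Z : T -> Prop) : Prop :=
  closed Z /\ (exists x, Z x) /\
  (forall A B, closed A -> closed B -> pred_sub Z (fun x => A x \/ B x) ->
     pred_sub Z A \/ pred_sub Z B).

Definition has_chain (t : nat) : Prop :=
  exists Z : nat -> T -> Prop,
    (forall i, (i <= t)%N -> irreducible_closed (Z i)) /\
    (forall i, (i < t)%N -> pred_ssub (Z i) (Z i.+1)).

Inductive enat := EFin of nat | EInf.

Definition enat_le (a b : enat) : Prop :=
  match a, b with
  | EFin m, EFin n => (m <= n)%N
  | _, EInf => True
  | EInf, EFin _ => False
  end.

Definition is_sup_len (n : nat) : Prop :=
  (forall t, has_chain t -> (t <= n)%N) /\
  (forall m, (forall t, has_chain t -> (t <= m)%N) -> (n <= m)%N).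

(* dimension = supremum in N ∪ {∞} of the lengths of chains of irreducible closed sets *)
Definition top_dim : enat :=
  match excluded_middle_informative (exists n, is_sup_len n) with
  | left H => EFin (proj1_sig (constructive_indefinite_description _ H))
  | right _ => EInf
  end.
End Topology.

Section Topologies.
Variable R : comNzRingType.

(* hull-kernel topology on Rd(R): subbasis of closed sets
   {H | x_1, ..., x_n ∈ H} for finite lists x_1..x_n of elements of R *)
Definition hk_subbasis (A : Rd R -> Prop) : Prop :=
  exists s : seq R, forall H : Rd R, A H <-> (forall x, x \in s -> proj1_sig H x).

Definition hk_closed (A : Rd R -> Prop) : Prop :=
  exists B, gen_closed hk_subbasis B /\ forall H, A H <-> B H.

Definition zariski_closed (A : Spec R -> Prop) : Prop :=
  exists E : R -> Prop, forall P : Spec R, A P <-> (forall x, E x -> proj1_sig P x).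
End Topologies.

Definition has_card (T : Type) (n : nat) : Prop :=
  exists f : 'I_n -> T, bijective f.

(* Main.v *)
Require Import Defs.
From mathcomp Require Import all_boot all_order all_algebra.
From mathcomp Require Import ring.
From Stdlib Require Import Classical ClassicalEpsilon FunctionalExtensionality PropExtensionality ProofIrrelevance.
Set Implicit Arguments. Unset Strict Implicit. Unset Printing Implicit Defensive.
Import GRing.Theory.

Definition bigU {T} (C : (T -> Prop) -> Prop) : T -> Prop := fun t => exists A, C A /\ A t.

Lemma pred_ext {T} (A B : T -> Prop) : pred_sub A B -> pred_sub B A -> A = B.
Proof. move=> h1 h2; apply: functional_extensionality => x; apply: propositional_extensionality; split; [exact: h1|exact: h2]. Qed.

Section Zorn.
Variable T : Type.
Variable nxt : (T -> Prop) -> (T -> Prop).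
Variable a0 : T -> Prop.

Inductive tw : (T -> Prop) -> Prop :=
| tw0 : tw a0
| twS A : tw A -> tw (nxt A)
| twU C : (forall A, C A -> tw A) -> (exists A, C A) ->
    (forall A B, C A -> C B -> pred_sub A B \/ pred_sub B A) -> tw (bigU C).

Hypothesis nxt_incr : forall A, pred_sub A (nxt A).

Lemma tw_a0 A : tw A -> pred_sub a0 A.
Proof.
elim=> [|B _ IH|C _ IH [A0 CA0] _].
- by [].
- by move=> x /IH; apply: nxt_incr.
- move=> x /(IH _ CA0) h; by exists A0.
Qed.

Definition extreme c := forall x, tw x -> pred_sub x c -> x <> c -> pred_sub (nxt x) c.

Lemma lem1 c : tw c -> extreme c -> forall x, tw x -> pred_sub x c \/ pred_sub (nxt c) x.
Proof.
move=> twc exc x0; elim=> [|x twx IH|C twC IH neC chC].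
- left; exact: tw_a0.
- case: IH => [xc|ncx].
  + case: (classic (x = c)) => [->|ne]; first by right.
    left; exact: exc.
  + right => y /ncx; apply: nxt_incr.
- case: (classic (exists A, C A /\ ~ pred_sub A c)) => [[A [CA nA]]|h].
  + right => y ny; case: (IH _ CA) => [h|h]; first by case: nA.
    by exists A; split=> //; exact: h.
  + left => y [A [CA Ay]]; apply: NNPP => ny; apply: h; exists A; split=> // hh.
    exact: ny (hh _ Ay).
Qed.

Lemma all_extreme c0 : tw c0 -> extreme c0.
Proof.
elim=> [|c twc IH|C twC IH neC chC].
- move=> x twx xa ne; exfalso; apply: ne; exact: pred_ext xa (tw_a0 twx).
- move=> x twx xs ne.
  case: (lem1 twc IH twx) => [xc|ncx].
  + case: (classic (x = c)) => [->|ne']; first by [].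
    move=> y /(IH _ twx xc ne'); apply: nxt_incr.
  + exfalso; apply: ne; exact: pred_ext xs ncx.
- move=> x twx xs ne.
  have [A [CA nAx]] : exists A, C A /\ ~ pred_sub A x.
    apply: NNPP => h; apply: ne; apply: pred_ext xs _ => y [A [CA Ay]].
    apply: NNPP => nx; apply: h; exists A; split=> // hh; exact: nx (hh _ Ay).
  case: (lem1 (twC _ CA) (IH _ CA) twx) => [xA|nAx'].
  + case: (classic (x = A)) => [eA|ne'].
    * by case: nAx; rewrite eA.
    * move=> y /(IH _ CA x twx xA ne') Ay; by exists A.
  + by case: nAx => y /nxt_incr /nAx'.
Qed.

Lemma tw_chain x c : tw x -> tw c -> pred_sub x c \/ pred_sub c x.
Proof.
move=> twx twc; case: (lem1 twc (all_extreme twc) twx) => [h|h]; first by left.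
by right => y /nxt_incr /h.
Qed.
End Zorn.

Lemma zorn T (F : (T->Prop)->Prop) a0 : F a0 ->
  (forall C, (forall A, C A -> F A) -> (exists A, C A) ->
     (forall A B, C A -> C B -> pred_sub A B \/ pred_sub B A) -> F (bigU C)) ->
  exists M, F M /\ forall J, F J -> pred_sub M J -> pred_sub J M.
Proof.
move=> Fa0 hC; apply: NNPP => nomax.
have step : forall A, F A -> exists B, F B /\ pred_sub A B /\ ~ pred_sub B A.
  move=> A FA; apply: NNPP => h; apply: nomax; exists A; split=> // J FJ AJ.
  apply: NNPP => nJA; apply: h; by exists J.
pose nxt A := match excluded_middle_informative
     (exists B, F B /\ pred_sub A B /\ ~ pred_sub B A) with
  | left e => proj1_sig (constructive_indefinite_description _ e) | right _ => A end.
have nxt_incr : forall A, pred_sub A (nxt A).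
  move=> A; rewrite /nxt; case: excluded_middle_informative => [e|_] //.
  by case: (proj2_sig (constructive_indefinite_description _ e)) => _ [].
have nxt_F : forall A, F A -> F (nxt A) /\ ~ pred_sub (nxt A) A.
  move=> A FA; rewrite /nxt; case: excluded_middle_informative => [e|ne].
  - by case: (proj2_sig (constructive_indefinite_description _ e)) => ? [].
  - by case: ne; apply: step.
have twF : forall A, tw nxt a0 A -> F A.
  move=> A0; elim=> // [A _ FA|C _ IH neC chC]; first by case: (nxt_F _ FA).
  exact: hC.
have twU' : tw nxt a0 (bigU (tw nxt a0)).
  apply: twU => //; first by exists a0; apply: tw0.
  move=> A B tA tB; exact: (@tw_chain T nxt a0 nxt_incr A B tA tB).
have [_ []] := nxt_F _ (twF _ twU').
move=> y ny; by exists (nxt (bigU (tw nxt a0))); split => //; apply: twS.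
Qed.

Section Ring.
Variable R : comNzRingType.
Local Open Scope ring_scope.

Lemma krull (I : R -> Prop) (x : R) : is_ideal I -> (forall k, ~ I (x ^+ k)) ->
  exists P, is_prime_ideal P /\ pred_sub I P /\ ~ P x.
Proof.
move=> idI nI.
pose F J := is_ideal J /\ pred_sub I J /\ forall k, ~ J (x ^+ k).
have [M [[idM [IM nM]] maxM]] : exists M, F M /\ forall J, F J -> pred_sub M J -> pred_sub J M.
  apply: (@zorn R F I); first by split=> //; split=> // y.
  move=> C hC [A0 CA0] chC; split; [split; [|split]|split].
  - exists A0; split=> //; by case: (hC _ CA0) => [[? _] _].
  - move=> a b [A [CA Aa]] [B [CB Bb]].
    case: (chC _ _ CA CB) => [AB|BA].
    + exists B; split=> //; case: (hC _ CB) => [[_ [hadd _]] _]; apply: hadd=> //; exact: AB.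
    + exists A; split=> //; case: (hC _ CA) => [[_ [hadd _]] _]; apply: hadd=> //; exact: BA.
  - move=> r a [A [CA Aa]]; exists A; split=>//; case: (hC _ CA) => [[_ [_ hm]] _]; exact: hm.
  - move=> y Iy; exists A0; split=>//; case: (hC _ CA0)=> [_ [h _]]; exact: h.
  - move=> k [A [CA Ak]]; case: (hC _ CA) => [_ [_ h]]; exact: h k Ak.
case: idM => [M0 [Madd Mmul]].
exists M; split; last split=> //; last first.
  move=> Mx; apply: (nM 1%N); by rewrite expr1.
split; first by split.
split.
  move=> h; apply: (nM 0%N); by rewrite expr0.
move=> a b Mab; apply: NNPP => /not_or_and [na nb].
have key : forall c, ~ M c -> exists k m r, M m /\ x ^+ k = m + r * c.
  move=> c nc; apply: NNPP => h.
  pose J z := exists m r, M m /\ z = m + r * c.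
  have FJ : F J.
    split; [split; [|split]|split].
    - exists 0, 0; split=> //; ring.
    - move=> _ _ [m1 [r1 [Mm1 ->]]] [m2 [r2 [Mm2 ->]]].
      exists (m1 + m2), (r1 + r2); split; [exact: Madd | ring].
    - move=> s _ [m [r [Mm ->]]]; exists (s * m), (s * r); split; [exact: Mmul | ring].
    - move=> z Iz; exists z, 0; split; [exact: IM | ring].
    - move=> k [m [r [Mm e]]]; apply: h; by exists k, m, r.
  apply: nc; apply: (maxM J FJ).
    move=> z Mz; exists z, 0; split=> //; ring.
  exists 0, 1; split=> //; ring.
have [k [m1 [r1 [Mm1 e1]]]] := key _ na.
have [l [m2 [r2 [Mm2 e2]]]] := key _ nb.
apply: (nM (k + l)%N).
have -> : x ^+ (k + l) = (m2 + r2 * b) * m1 + (r1 * a) * m2 + (r1 * r2) * (a * b).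
  rewrite exprD e1 e2; ring.
apply: (Madd); [apply: (Madd)|]; exact: Mmul.
Qed.
End Ring.

Lemma sup_uniq T (c : (T->Prop)->Prop) n m : is_sup_len c n -> is_sup_len c m -> n = m.
Proof. move=> [u1 l1] [u2 l2]; apply/eqP; by rewrite eqn_leq (l1 _ u2) (l2 _ u1). Qed.

Lemma td_fin T (c : (T->Prop)->Prop) n : is_sup_len c n -> top_dim c = EFin n.
Proof.
move=> h; rewrite /top_dim; case: excluded_middle_informative => [e|ne]; last by case: ne; exists n.
by rewrite (sup_uniq (proj2_sig (constructive_indefinite_description _ e)) h).
Qed.

Lemma td_inf T (c : (T->Prop)->Prop) : (forall n, ~ is_sup_len c n) -> top_dim c = EInf.
Proof.
move=> h; rewrite /top_dim; case: excluded_middle_informative => [[n e]|//].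
by case: (h n).
Qed.

Lemma sup_ex T (c : (T->Prop)->Prop) b : (forall t, has_chain c t -> (t <= b)%N) ->
  exists n, is_sup_len c n.
Proof.
elim/ltn_ind: b => b IH hb.
case: (classic (exists m, (forall t, has_chain c t -> (t <= m)%N) /\ (m < b)%N)) => [[m [um mb]]|h].
- exact: IH mb um.
- exists b; split=> // m um; rewrite leqNgt; apply/negP => mb; apply: h; by exists m.
Qed.

Lemma td_le T1 T2 (c1 : (T1->Prop)->Prop) (c2 : (T2->Prop)->Prop) :
  (forall t, has_chain c1 t -> has_chain c2 t) -> enat_le (top_dim c1) (top_dim c2).
Proof.
move=> H.
case: (classic (exists n, is_sup_len c2 n)) => [[n [u2 l2]]|ne].
- have [m [u1 l1]] := @sup_ex _ c1 n (fun t h => u2 t (H t h)).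
  rewrite (td_fin (conj u2 l2)) (td_fin (conj u1 l1)) /=.
  apply: l1 => t h; exact: u2 _ (H _ h).
- rewrite (@td_inf _ c2 (fun n h => ne (ex_intro _ n h))); by case: (top_dim c1).
Qed.

Lemma td_eq T1 T2 (c1 : (T1->Prop)->Prop) (c2 : (T2->Prop)->Prop) :
  (forall t, has_chain c1 t <-> has_chain c2 t) -> top_dim c1 = top_dim c2.
Proof.
move=> H.
have h1 := @td_le _ _ c1 c2 (fun t => (H t).1).
have h2 := @td_le _ _ c2 c1 (fun t => (H t).2).
move: h1 h2; case: (top_dim c1) => [a|]; case: (top_dim c2) => [b|] //= ab ba.
by have -> : a = b by apply/eqP; rewrite eqn_leq ab ba.
Qed.

Definition pb (P : Prop) : bool := if excluded_middle_informative P then true else false.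
Lemma pbP P : reflect P (pb P).
Proof. rewrite /pb; case: excluded_middle_informative => h; constructor => //. Qed.

Definition psubs {T} (A B : T -> Prop) := pred_sub A B /\ ~ pred_sub B A.

Section Top.
Variable R : comNzRingType.
Local Open Scope ring_scope.

Definition rpi (J : R -> Prop) := is_ideal J /\ is_proper J /\ is_radical J.
Definition RdChain (t : nat) := exists H : nat -> R -> Prop,
  (forall i, (i <= t)%N -> rpi (H i)) /\ (forall i, (i < t)%N -> psubs (H i.+1) (H i)).
Definition SpecChain (t : nat) := exists H : nat -> R -> Prop,
  (forall i, (i <= t)%N -> is_prime_ideal (H i)) /\ (forall i, (i < t)%N -> psubs (H i.+1) (H i)).

Lemma prime_rpi P : is_prime_ideal P -> rpi P.
Proof.
case=> iP [pP mP]; split=> //; split=> // x; elim=> [|n IH].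
  by rewrite expr0.
by rewrite exprS => /mP [].
Qed.

Lemma rpiI A B : rpi A -> rpi B -> rpi (fun r => A r /\ B r).
Proof.
move=> [[A0 [Aa Am]] [Ap Ar]] [[B0 [Ba Bm]] [Bp Br]]; split; [split; [|split]|split].
- by split.
- move=> x y [? ?] [? ?]; split; [exact: Aa | exact: Ba].
- move=> r x [? ?]; split; [exact: Am | exact: Bm].
- by case.
- move=> x n [h1 h2]; split; [exact: (Ar x n h1) | exact: (Br x n h2)].
Qed.

Lemma gen_up (B : Rd R -> Prop) : gen_closed (@hk_subbasis R) B ->
  forall H H' : Rd R, B H -> pred_sub (proj1_sig H) (proj1_sig H') -> B H'.
Proof.
elim=> [A [s hs]||A B' _ IHA _ IHB|F _ IH] H H' hH s'.
- apply/hs => y ys; apply: s'; exact: (hs H).1 hH y ys.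
- by [].
- case: hH => [h|h]; [left; exact: IHA h s' | right; exact: IHB h s'].
- move=> A FA; exact: IH A FA H H' (hH A FA) s'.
Qed.

Lemma hk_up (A : Rd R -> Prop) : hk_closed A ->
  forall H H' : Rd R, A H -> pred_sub (proj1_sig H) (proj1_sig H') -> A H'.
Proof.
case=> B [gB eB] H H' /eB hH s'; apply/eB; exact: gen_up gB H H' hH s'.
Qed.

Lemma VR_closed (E : R -> Prop) : @hk_closed R (fun H : Rd R => pred_sub E (proj1_sig H)).
Proof.
pose Fam (A : Rd R -> Prop) := exists x, E x /\ forall H : Rd R, A H <-> proj1_sig H x.
exists (fun H => forall A, Fam A -> A H); split.
  apply: gc_inter => A [x [Ex hA]]; apply: gc_sub; exists [:: x] => H.
  rewrite hA; split; first by move=> h y; rewrite mem_seq1 => /eqP ->.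
  by apply; rewrite mem_seq1.
move=> H; split.
- move=> h A [x [Ex hA]]; apply/hA; exact: h.
- move=> h x Ex; apply: (h (fun G : Rd R => proj1_sig G x)); by exists x.
Qed.

Lemma irr_hk (Z : Rd R -> Prop) : irreducible_closed (@hk_closed R) Z ->
  exists K, rpi K /\ forall H : Rd R, Z H <-> pred_sub K (proj1_sig H).
Proof.
case=> cZ [[H0 ZH0] irr].
pose K r := forall H : Rd R, Z H -> proj1_sig H r.
have rK : rpi K.
  split; [split; [|split]|split].
  - move=> H _; by case: (proj2_sig H) => [[]].
  - move=> x y Kx Ky H ZH; case: (proj2_sig H) => [[_ [ha _]] _]; apply: ha; [exact: Kx|exact: Ky].
  - move=> r x Kx H ZH; case: (proj2_sig H) => [[_ [_ hm]] _]; apply: hm; exact: Kx.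
  - move=> K1; case: (proj2_sig H0) => [_ [hp _]]; exact: hp (K1 _ ZH0).
  - move=> x n Kx H ZH; case: (proj2_sig H) => [_ [_ hr]]; exact: hr _ n (Kx _ ZH).
pose Ke : Rd R := exist _ K rK.
have key : forall B, gen_closed (@hk_subbasis R) B -> pred_sub Z B -> B Ke.
  move=> B0; elim=> [A [s hs]||A B gA IHA gB IHB|F _ IH] hZ.
  - apply/hs => y ys H ZH; exact: (hs H).1 (hZ _ ZH) y ys.
  - by case: (hZ _ ZH0).
  - have cA : hk_closed A by exists A; split.
    have cB : hk_closed B by exists B; split=> // H.
    case: (irr A B cA cB hZ) => [h|h]; [left; exact: IHA h | right; exact: IHB h].
  - move=> A FA; apply: IH => // H ZH; exact: hZ H ZH A FA.
exists K; split=> // H; split.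
- move=> ZH r Kr; exact: Kr H ZH.
- move=> KH; case: (cZ) => B [gB eB]; apply/eB.
  apply: (gen_up gB (key B gB (fun H ZH => (eB H).1 ZH))); exact: KH.
Qed.

Lemma irr_of_rpi K (rK : rpi K) :
  irreducible_closed (@hk_closed R) (fun H : Rd R => pred_sub K (proj1_sig H)).
Proof.
split; first exact: VR_closed.
split; first by exists (exist _ K rK).
move=> A B cA cB hs; case: (hs (exist _ K rK) (fun x h => h)) => [hA|hB];
  [left|right] => H KH; [exact: hk_up cA _ _ hA KH | exact: hk_up cB _ _ hB KH].
Qed.

Lemma hk_chain t : has_chain (@hk_closed R) t <-> RdChain t.
Proof.
split.
- case=> Z [hirr hss].
  pose H i := match excluded_middle_informative
     (exists K, rpi K /\ forall G : Rd R, Z i G <-> pred_sub K (proj1_sig G)) with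
     | left e => proj1_sig (constructive_indefinite_description _ e)
     | right _ => fun _ => True end.
  have HP : forall i, (i <= t)%N -> rpi (H i) /\ forall G, Z i G <-> pred_sub (H i) (proj1_sig G).
    move=> i it; rewrite /H; case: excluded_middle_informative => [e|ne].
      exact: proj2_sig (constructive_indefinite_description _ e).
    by case: ne; apply: irr_hk; apply: hirr.
  exists H; split; first by move=> i /HP [].
  move=> i it; have [r1 e1] := HP i (ltnW it); have [r2 e2] := HP i.+1 it.
  case: (hss i it) => sZ nZ; split.
  + have : Z i.+1 (exist _ (H i) r1) by apply: sZ; apply/e1.
    by move/e2.
  + move=> h; apply: nZ => G /e2 h2; apply/e1 => r /h /h2 //.
- move=> HC.
  case: HC => H [hr hs]; exists (fun i (G : Rd R) => pred_sub (H i) (proj1_sig G)); split.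
  + move=> i it; exact: irr_of_rpi (hr i it).
  + move=> i it; case: (hs i it) => s ns; split.
    * move=> G hG r /s; exact: hG.
    * move=> h; apply: ns; exact: (h (exist _ (H i.+1) (hr _ it)) (fun r x => x)).
Qed.

Lemma zar_up (A : Spec R -> Prop) : zariski_closed A ->
  forall P Q : Spec R, A P -> pred_sub (proj1_sig P) (proj1_sig Q) -> A Q.
Proof. case=> E hE P Q /hE h s; apply/hE => x /h /s //. Qed.

Lemma irr_zar (Z : Spec R -> Prop) : irreducible_closed (@zariski_closed R) Z ->
  exists K, is_prime_ideal K /\ forall P : Spec R, Z P <-> pred_sub K (proj1_sig P).
Proof.
case=> cZ [[P0 ZP0] irr].
pose K r := forall P : Spec R, Z P -> proj1_sig P r.
have pK : is_prime_ideal K.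
  split; [split; [|split]|split].
  - move=> P _; by case: (proj2_sig P) => [[]].
  - move=> x y Kx Ky P ZP; case: (proj2_sig P) => [[_ [ha _]] _]; apply: ha; [exact: Kx|exact: Ky].
  - move=> r x Kx P ZP; case: (proj2_sig P) => [[_ [_ hm]] _]; apply: hm; exact: Kx.
  - move=> K1; case: (proj2_sig P0) => [_ [hp _]]; exact: hp (K1 _ ZP0).
  - move=> a b Kab.
    have cl : forall c, @zariski_closed R (fun P : Spec R => proj1_sig P c).
      move=> c; exists (fun y => y = c) => P; split; first by move=> h y ->.
      by apply.
    case: (irr _ _ (cl a) (cl b)) => [P ZP|h|h]; [|left|right]; last 2 first.
    + move=> P ZP; exact: h P ZP.
    + move=> P ZP; exact: h P ZP.
    case: (proj2_sig P) => [_ [_ hm]]; exact: hm _ _ (Kab _ ZP).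
exists K; split=> // P; split.
- move=> ZP r Kr; exact: Kr P ZP.
- move=> KP; case: (cZ) => E hE; apply/hE => y Ey; apply: KP => P' ZP'.
  exact: (hE P').1 ZP' y Ey.
Qed.

Lemma irr_of_prime K (pK : is_prime_ideal K) :
  irreducible_closed (@zariski_closed R) (fun P : Spec R => pred_sub K (proj1_sig P)).
Proof.
split; first by exists K.
split; first by exists (exist _ K pK).
move=> A B cA cB hs; case: (hs (exist _ K pK) (fun x h => h)) => [hA|hB];
  [left|right] => H KH; [exact: zar_up cA _ _ hA KH | exact: zar_up cB _ _ hB KH].
Qed.

Lemma zar_chain t : has_chain (@zariski_closed R) t <-> SpecChain t.
Proof.
split.
- case=> Z [hirr hss].
  pose H i := match excluded_middle_informative
     (exists K, is_prime_ideal K /\ forall G : Spec R, Z i G <-> pred_sub K (proj1_sig G)) with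
     | left e => proj1_sig (constructive_indefinite_description _ e)
     | right _ => fun _ => True end.
  have HP : forall i, (i <= t)%N -> is_prime_ideal (H i) /\ forall G, Z i G <-> pred_sub (H i) (proj1_sig G).
    move=> i it; rewrite /H; case: excluded_middle_informative => [e|ne].
      exact: proj2_sig (constructive_indefinite_description _ e).
    by case: ne; apply: irr_zar; apply: hirr.
  exists H; split; first by move=> i /HP [].
  move=> i it; have [r1 e1] := HP i (ltnW it); have [r2 e2] := HP i.+1 it.
  case: (hss i it) => sZ nZ; split.
  + have : Z i.+1 (exist _ (H i) r1) by apply: sZ; apply/e1.
    by move/e2.
  + move=> h; apply: nZ => G /e2 h2; apply/e1 => r /h /h2 //.
- move=> HC; case: HC => H [hr hs]; exists (fun i (G : Spec R) => pred_sub (H i) (proj1_sig G)); split.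
  + move=> i it; exact: irr_of_prime (hr i it).
  + move=> i it; case: (hs i it) => s ns; split.
    * move=> G hG r /s; exact: hG.
    * move=> h; apply: ns; exact: (h (exist _ (H i.+1) (hr _ it)) (fun r x => x)).
Qed.

End Top.

Section Main.
Variable R : comNzRingType.
Local Open Scope ring_scope.

Lemma spec_eq (P Q : Spec R) : proj1_sig P = proj1_sig Q -> P = Q.
Proof. case: P Q => [P p] [Q q] /= e; subst; by rewrite (proof_irrelevance _ p q). Qed.

Lemma spec_inhab : exists P : Spec R, True.
Proof.
have iZ : is_ideal (fun r : R => r = 0).
  split=> //; split; [move=> x y -> ->; by rewrite addr0 | move=> r x ->; by rewrite mulr0].
have [P [pP _]] := @krull R _ 1 iZ (fun k => ltac:(rewrite expr1n; apply/eqP; exact: oner_neq0)).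
by exists (exist _ P pP).
Qed.

Lemma rd_bound n (f : 'I_n -> Spec R) (g : Spec R -> 'I_n) (gf : cancel g f) t :
  RdChain R t -> (t < n)%N.
Proof.
case=> H [hr hs].
pose S i := [set j : 'I_n | pb (pred_sub (H i) (proj1_sig (f j)))].
have getj : forall J x, rpi J -> ~ J x ->
    exists j, pred_sub J (proj1_sig (f j)) /\ ~ proj1_sig (f j) x.
  move=> J x [iJ [_ rJ]] nJ.
  have [P [pP [JP nP]]] := krull iJ (fun k h => nJ (rJ x k h)).
  exists (g (exist _ P pP)); rewrite gf /=; by split.
have key : forall i, (i <= t)%N -> (i < #|S i|)%N.
  elim=> [_|i IH it].
  - have [j [h _]] := getj (H 0%N) 1 (hr 0%N (leq0n _)) ((hr 0%N (leq0n _)).2.1).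
    apply/card_gt0P; exists j; rewrite inE; exact/pbP.
  - have h1 := IH (ltnW it).
    suff /proper_card h2 : S i \proper S i.+1 by exact: leq_ltn_trans h1 h2.
    case: (hs i it) => s ns.
    apply/properP; split.
      apply/subsetP => j; rewrite !inE => /pbP h; apply/pbP => r /s; exact: h.
    have [x hx] : exists x, H i x /\ ~ H i.+1 x.
      apply: NNPP => hn; apply: ns => x hx; apply: NNPP => nx; apply: hn; by exists x.
    have [j [h1' h2]] := getj _ x (hr _ it) hx.2.
    exists j; rewrite inE; first exact/pbP.
    apply/pbP => h; apply: h2; exact: h _ hx.1.
have h := key t (leqnn t).
apply: (leq_trans h); rewrite -[n in (_ <= n)%N]card_ord; exact: max_card.
Qed.

Lemma avoid m (f : 'I_m -> R -> Prop) (pf : forall i, is_prime_ideal (f i))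
  (M : R -> Prop) (pM : is_prime_ideal M) (S : {set 'I_m}) :
  (forall j, j \in S -> ~ pred_sub (f j) M) ->
  exists y, (forall j, j \in S -> f j y) /\ ~ M y.
Proof.
move=> h.
pose a j := match excluded_middle_informative (exists r, f j r /\ ~ M r) with
  | left e => proj1_sig (constructive_indefinite_description _ e) | right _ => 1 end.
have ha : forall j, j \in S -> f j (a j) /\ ~ M (a j).
  move=> j jS; rewrite /a; case: excluded_middle_informative => [e|ne].
    exact: proj2_sig (constructive_indefinite_description _ e).
  case: (h j jS) => r fr; apply: NNPP => nr; apply: ne; by exists r.
exists (\prod_(j in S) a j); split.
- move=> j jS; rewrite (bigD1 j) //= mulrC; case: (pf j) => [[_ [_ hm]] _].
  apply: hm; exact: (ha j jS).1.
- case: pM => [_ [pp pm]].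
  apply: (big_ind (fun z => ~ M z)) => //.
  + by move=> x y nx ny /pm [].
  + move=> j jS; exact: (ha j jS).2.
Qed.

Lemma chain_primes m (f : 'I_m -> R -> Prop) (pf : forall i, is_prime_ideal (f i))
  (df : forall i j, pred_sub (f i) (f j) -> pred_sub (f j) (f i) -> i = j) k :
  forall S : {set 'I_m}, #|S| = k.+1 -> exists H : nat -> R -> Prop,
   (forall i, (i <= k)%N -> rpi (H i)) /\ (forall i, (i < k)%N -> psubs (H i.+1) (H i)) /\
   forall r, H k r <-> (forall j, j \in S -> f j r).
Proof.
elim: k => [|k IH] S cS.
- have /cards1P [j ->] : #|S| == 1%N by rewrite cS.
  exists (fun _ => f j); split; first by move=> i _; exact: prime_rpi.
  split=> // r; split; first by move=> h l; rewrite inE => /eqP ->.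
  by apply; rewrite inE.
- have [i0 i0S] : exists i0, i0 \in S by apply/card_gt0P; rewrite cS.
  pose D i := [set j in S | pb (pred_sub (f j) (f i)) && (j != i)].
  have [M MS Mmin] : exists2 M, M \in S & forall j, j \in S -> pred_sub (f j) (f M) -> j = M.
    case: (arg_minnP (fun i => #|D i|) i0S) => M MS hM.
    exists M => // j jS sj; apply/eqP; apply: contraT => jM.
    have : (#|D j| < #|D M|)%N.
      apply: proper_card; apply/properP; split.
        apply/subsetP => l; rewrite !inE => /and3P [lS /pbP slj lj]; rewrite lS /=.
        apply/andP; split; first by apply/pbP => r /slj /sj.
        apply/negP => /eqP lM; subst l; move/negP: jM; apply; apply/eqP; exact: df _ _ sj slj.
      exists j; rewrite !inE ?jS /=; last by rewrite eqxx andbF.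
      by apply/andP; split; [exact/pbP | exact: jM].
    by rewrite ltnNge hM.
  pose S' := S :\ M.
  have cS' : #|S'| = k.+1 by move: cS; rewrite (cardsD1 M) MS add1n => [[]].
  have [H' [hr [hs hk]]] := IH S' cS'.
  exists (fun i => if (i <= k)%N then H' i else (fun r => H' k r /\ f M r)).
  split; [|split].
  + move=> i ik; case: ifP => [/hr //|_]; apply: rpiI; [exact: hr | exact: prime_rpi].
  + move=> i ik; have ik' : (i <= k)%N := ik; rewrite ik'; case: (leqP i.+1 k) => [i1k|ki]; first exact: hs.
    have ei : i = k by apply/eqP; rewrite eqn_leq ik' -ltnS ki.
    subst i; split; first by move=> r [].
    move=> h.
    have hav : forall j, j \in S' -> ~ pred_sub (f j) (f M).
      move=> j; rewrite !inE => /andP [jM jS] sj; by rewrite (Mmin j jS sj) eqxx in jM.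
    have [y [hy ny]] := avoid pf (pf M) hav.
    apply: ny; apply: (h y _).2; exact/hk.
  + move=> r; rewrite ltnn; split.
    * case=> hkr fM j jS; case: (eqVneq j M) => [->//|jM].
      apply: ((hk r).1 hkr j); by rewrite !inE jM jS.
    * move=> h; split; last exact: h.
      apply/hk => j; rewrite inE => /andP [_ jS]; exact: h.
Qed.

End Main.

Section Fin.
Variable R : comNzRingType.
Local Open Scope ring_scope.

Lemma inj_seq (hinf : forall n, ~ has_card (Spec R) n) (P0 : Spec R) :
  forall m, exists f : nat -> Spec R, forall i j, (i < m)%N -> (j < m)%N -> f i = f j -> i = j.
Proof.
elim=> [|m [f hf]]; first by exists (fun _ => P0).
case: (classic (forall x, exists i, (i < m)%N /\ f i = x)) => [hall|].
- exfalso; apply: (hinf m).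
  pose g x : 'I_m := let e := constructive_indefinite_description _ (hall x) in
     Ordinal (proj1 (proj2_sig e)).
  exists (fun i : 'I_m => f i); exists g.
  + move=> i; apply: val_inj; rewrite /g /=.
    case: (constructive_indefinite_description _ _) => j /= [jm e].
    exact: hf jm (ltn_ord i) e.
  + move=> x; rewrite /g /=.
    by case: (constructive_indefinite_description _ _) => j /= [jm e].
- move=> /not_all_ex_not [x hx].
  exists (fun i => if i == m then x else f i) => i j im jm.
  case: (eqVneq i m) => [->|ni]; case: (eqVneq j m) => [->|nj] //.
  + move=> e; case: hx; exists j; split=> //; by rewrite ltn_neqAle nj -ltnS.
  + move=> e; case: hx; exists i; split=> //; by rewrite ltn_neqAle ni -ltnS.
  + apply: hf; by rewrite ltn_neqAle ?ni ?nj -ltnS.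
Qed.

Lemma rpi_prime (lin : forall P Q : Spec R, pred_sub (proj1_sig P) (proj1_sig Q) \/
                                           pred_sub (proj1_sig Q) (proj1_sig P))
  (J : R -> Prop) : rpi J -> is_prime_ideal J.
Proof.
move=> [iJ [pJ rJ]]; split=> //; split=> // a b Jab.
apply: NNPP => /not_or_and [na nb].
have [P1 [p1 [J1 n1]]] := krull iJ (fun k h => na (rJ a k h)).
have [P2 [p2 [J2 n2]]] := krull iJ (fun k h => nb (rJ b k h)).
case: (lin (exist _ P1 p1) (exist _ P2 p2)) => /= h.
- case: p1 => [_ [_ m1]]; case: (m1 a b (J1 _ Jab)) => // /h; exact: n2.
- case: p2 => [_ [_ m2]]; case: (m2 a b (J2 _ Jab)) => // /h; exact: n1.
Qed.

Lemma chain_of_inj m (f : 'I_m.+1 -> Spec R) : injective f -> RdChain R m.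
Proof.
move=> inj.
have [H [hr [hs _]]] := @chain_primes R m.+1 (fun i => proj1_sig (f i))
   (fun i => proj2_sig (f i)) (fun i j s1 s2 => inj _ _ (spec_eq (pred_ext s1 s2))) m setT
   ltac:(by rewrite cardsT card_ord).
by exists H.
Qed.

End Fin.

Theorem proposition4p2 (R : comNzRingType) :
  ((forall n : nat, ~ has_card (Spec R) n) -> top_dim (@hk_closed R) = EInf) /\
  (forall n : nat, has_card (Spec R) n -> top_dim (@hk_closed R) = EFin n.-1) /\
  enat_le (top_dim (@zariski_closed R)) (top_dim (@hk_closed R)) /\
  ((forall P Q : Spec R, pred_sub (proj1_sig P) (proj1_sig Q) \/ pred_sub (proj1_sig Q) (proj1_sig P)) ->
     top_dim (@hk_closed R) = top_dim (@zariski_closed R)).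
Proof.
have [P0 _] := spec_inhab R.
split; [|split; [|split]].
- move=> hinf; apply: td_inf => n [un _].
  have [f hf] := inj_seq hinf P0 n.+2.
  have : has_chain (@hk_closed R) n.+1.
    apply/hk_chain; apply: (@chain_of_inj R n.+1 (fun i : 'I_n.+2 => f i)).
    move=> i j e; apply: val_inj; exact: hf (ltn_ord i) (ltn_ord j) e.
  by move/un; rewrite ltnn.
- move=> n [f [g fg gf]].
  have n0 : (0 < n)%N := leq_ltn_trans (leq0n _) (ltn_ord (g P0)).
  apply: td_fin; split.
  + move=> t /hk_chain /(rd_bound gf) h; by rewrite -ltnS (prednK n0).
  + move=> m um; apply: um; apply/hk_chain.
    move: n n0 f g fg gf => [//|n'] _ f g fg _ /=.
    exact: chain_of_inj (can_inj fg).
- apply: td_le => t /zar_chain [H [hp hs]]; apply/hk_chain.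
  exists H; split=> // i it; exact: prime_rpi (hp i it).
- move=> lin; apply: td_eq => t; rewrite hk_chain zar_chain; split.
  + case=> H [hr hs]; exists H; split=> // i it; exact: (@rpi_prime R lin (H i) (hr i it)).
  + case=> H [hp hs]; exists H; split=> // i it; exact: prime_rpi (hp i it).
Qed.
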